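(* Suppose that $\mathcal{H}$ is a flat group of automorphisms of a totally disconnected, locally compact group $G$. Then $\mathcal{H}=\mathcal{H}_{FC_d}$, i.e. every element of $\mathcal{H}$ has bounded conjugacy class $\varphi^{\mathcal{H}}$.
   Context: Automorphisms are continuous with continuous inverse. $\mathcal{B}(G)$ is the set of compact, open subgroups of $G$ with metric $d(V,W)=\log\bigl(|V:V\cap W|\cdot|W:W\cap V|\bigr)$. A set $B$ of automorphisms is bounded if $B.V=\{\beta(V):\beta\in B\}$ has bounded diameter for some (equivalently every) $V\in\mathcal{B}(G)$. $\varphi^{\mathcal{H}}=\{\psi\varphi\psi^{-1}:\psi\in\mathcal{H}\}$ and $\mathcal{H}_{FC_d}=\{\varphi\in\mathcal{H}:\varphi^{\mathcal{H}}\text{ bounded}\}$. The scale of $\varphi$ is $s_G(\varphi)=\min\{|\varphi(V):\varphi(V)\cap V|:V\in\mathcal{B}(G)\}$; $\mathcal{H}$ is flat if there is $O\in\mathcal{B}(G)$ with $|\varphi(O):\varphi(O)\cap O|=s_G(\varphi)$ for all $\varphi\in\mathcal{H}$. *)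

(* Defs.v *)
From Stdlib Require Import Reals.
From mathcomp Require Import all_boot.
From mathcomp Require Import all_classical all_reals all_analysis.

Set Implicit Arguments.
Unset Strict Implicit.
Unset Printing Implicit Defensive.

Local Open Scope classical_set_scope.

Section TDLC.
Variables (G : topologicalType) (mul : G -> G -> G) (inv : G -> G) (one : G).

Definition is_group : Prop :=
  [/\ forall x y z, mul x (mul y z) = mul (mul x y) z,
      forall x, mul one x = x, forall x, mul x one = x,
      forall x, mul (inv x) x = one & forall x, mul x (inv x) = one].

Definition is_topological_group : Prop :=
  [/\ is_group, continuous (fun p : G * G => mul p.1 p.2) & continuous inv].

Definition is_tdlc_group : Prop :=
  [/\ is_topological_group, hausdorff_space G,
      locally_compact [set: G] & totally_disconnected [set: G]].

Definition is_subgroup (V : set G) : Prop :=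
  [/\ V one, forall x y, V x -> V y -> V (mul x y) & forall x, V x -> V (inv x)].

Definition compact_open_subgroup (V : set G) : Prop :=
  [/\ is_subgroup V, compact V & open V].

(* index A B n : the subgroup B <= A has exactly n left cosets b*B in A *)
Definition index (A B : set G) (n : nat) : Prop :=
  exists f : 'I_n -> G,
    [/\ forall i, A (f i),
        forall i j, B (mul (inv (f i)) (f j)) -> i = j &
        forall a, A a -> exists i, B (mul (inv (f i)) a)].

Definition dist_eq (V W : set G) (r : R) : Prop :=
  exists m n, [/\ index V (V `&` W) m, index W (W `&` V) n &
                  r = Rpower.ln (INR (m * n)%N)].

Definition is_automorphism (phi : G -> G) : Prop :=
  [/\ forall x y, phi (mul x y) = mul (phi x) (phi y),
      continuous phi &
      exists psi : G -> G, [/\ cancel phi psi, cancel psi phi & continuous psi]].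

Definition bounded_auts (B : set (G -> G)) : Prop :=
  exists V, compact_open_subgroup V /\
    exists M : R, forall b b' r, B b -> B b' -> dist_eq (b @` V) (b' @` V) r ->
      Rle r M.

Definition is_group_of_automorphisms (H : set (G -> G)) : Prop :=
  [/\ forall phi, H phi -> is_automorphism phi,
      H id,
      forall phi psi, H phi -> H psi -> H (phi \o psi) &
      forall phi, H phi -> exists psi, [/\ H psi, cancel phi psi & cancel psi phi]].

Definition conj_class (H : set (G -> G)) (phi : G -> G) : set (G -> G) :=
  [set chi | exists psi psi' : G -> G,
     [/\ H psi, cancel psi psi', cancel psi' psi & chi = psi \o phi \o psi']].

Definition FCd (H : set (G -> G)) : set (G -> G) :=
  [set phi | H phi /\ bounded_auts (conj_class H phi)].

Definition is_scale (phi : G -> G) (n : nat) : Prop :=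
  (exists V, compact_open_subgroup V /\ index (phi @` V) (phi @` V `&` V) n) /\
  forall V m, compact_open_subgroup V -> index (phi @` V) (phi @` V `&` V) m ->
    (n <= m)%N.

Definition flat (H : set (G -> G)) : Prop :=
  exists O, compact_open_subgroup O /\
    forall phi, H phi -> exists n, index (phi @` O) (phi @` O `&` O) n /\ is_scale phi n.

End TDLC.

(* Main.v *)
Require Import Defs.
From Stdlib Require Import Reals.
From mathcomp Require Import all_boot.
From mathcomp Require Import all_classical all_reals all_analysis.
From mathcomp Require Import zify.

Set Implicit Arguments.
Unset Strict Implicit.
Local Open Scope classical_set_scope.

Definition hom (G : topologicalType) (mul : G -> G -> G) (f : G -> G) :=
  forall x y, f (mul x y) = mul (f x) (f y).

Definition cover (G : topologicalType) (mul : G -> G -> G) (inv : G -> G)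
  (A C : set G) (K : nat) :=
  exists g : nat -> G, forall a, A a -> exists k, (k < K)%N /\ C (mul (inv (g k)) a).

Lemma g_cancel (G : topologicalType) mul inv (one : G) :
  is_group mul inv one -> forall a x y, mul a x = mul a y -> x = y.
Proof.
case=> mA m1 m1r mV mVr a x y e.
by rewrite -(m1 x) -(mV a) -mA e mA mV m1.
Qed.

Lemma g_inv_uniq (G : topologicalType) mul inv (one : G) :
  is_group mul inv one -> forall x y, mul x y = one -> inv x = y.
Proof.
case=> mA m1 m1r mV mVr x y e.
by rewrite -(m1r (inv x)) -e mA mV m1.
Qed.

Lemma g_invM (G : topologicalType) mul inv (one : G) :
  is_group mul inv one -> forall x y, inv (mul x y) = mul (inv y) (inv x).
Proof.
move=> Hg; have [mA m1 m1r mV mVr] := Hg; move=> x y.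
apply: (g_inv_uniq Hg).
by rewrite -mA (mA y) mVr m1 mVr.
Qed.

Lemma g_invK (G : topologicalType) mul inv (one : G) :
  is_group mul inv one -> forall x, inv (inv x) = x.
Proof.
move=> Hg; have [mA m1 m1r mV mVr] := Hg; move=> x.
by apply: (g_inv_uniq Hg); rewrite mV.
Qed.

Lemma hom_one (G : topologicalType) mul inv (one : G) f :
  is_group mul inv one -> hom mul f -> f one = one.
Proof.
move=> Hg; have [mA m1 m1r mV mVr] := Hg; move=> hf.
apply: (g_cancel Hg (a := f one)).
by rewrite -hf m1 m1r.
Qed.

Lemma hom_inv (G : topologicalType) mul inv (one : G) f :
  is_group mul inv one -> hom mul f -> forall x, f (inv x) = inv (f x).
Proof.
move=> Hg; have [mA m1 m1r mV mVr] := Hg; move=> hf x.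
symmetry; apply: (g_inv_uniq Hg).
by rewrite -hf mVr (hom_one Hg hf).
Qed.

Lemma hom_comp (G : topologicalType) mul (f g : G -> G) :
  hom mul f -> hom mul g -> hom mul (f \o g).
Proof. by move=> hf hg x y /=; rewrite hg hf. Qed.

Lemma hom_cancel (G : topologicalType) mul (f g : G -> G) :
  hom mul f -> cancel f g -> cancel g f -> hom mul g.
Proof.
move=> hf fg gf x y.
by rewrite -{1}(gf x) -{1}(gf y) -hf fg.
Qed.

Lemma subgroup_image (G : topologicalType) mul inv (one : G) f V :
  is_group mul inv one -> hom mul f -> is_subgroup mul inv one V ->
  is_subgroup mul inv one (f @` V).
Proof.
move=> Hg hf [V1 VM VV]; split.
- by exists one => //; rewrite (hom_one Hg hf).
- move=> _ _ [x Vx <-] [y Vy <-]; exists (mul x y); first exact: VM.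
  by rewrite hf.
- move=> _ [x Vx <-]; exists (inv x); first exact: VV.
  by rewrite (hom_inv Hg hf).
Qed.

Lemma cover_mono (G : topologicalType) mul inv (A C : set G) K K' :
  cover mul inv A C K -> (K <= K')%N -> cover mul inv A C K'.
Proof.
move=> [g hg] le; exists g => a Aa; have [k [lk Ck]] := hg a Aa.
by exists k; split => //; apply: leq_trans le.
Qed.

Lemma cover_trans (G : topologicalType) mul inv (one : G) (A B C : set G) K1 K2 :
  is_group mul inv one ->
  cover mul inv A B K1 -> cover mul inv B C K2 -> cover mul inv A C (K1 * K2).
Proof.
move=> Hg; have [mA m1 m1r mV mVr] := Hg.
move=> [g1 h1] [g2 h2].
exists (fun k => mul (g1 (k %/ K2)) (g2 (k %% K2))) => a Aa.
have [k1 [lk1 Bk1]] := h1 a Aa.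
have [k2 [lk2 Ck2]] := h2 _ Bk1.
have K2p : (0 < K2)%N by apply: leq_ltn_trans lk2.
exists (k1 * K2 + k2); split.
  have : (k1.+1 * K2 <= K1 * K2)%N by rewrite leq_mul2r lk1 orbT.
  rewrite mulSn. lia.
rewrite divnMDl // divn_small // addn0 modnMDl modn_small //.
by rewrite (g_invM Hg) -mA.
Qed.

Lemma index_cover (G : topologicalType) mul inv (one : G) (A C : set G) n :
  Defs.index mul inv A (A `&` C) n -> cover mul inv A C n.
Proof.
move=> [f [fA finj fcov]].
exists (fun k => if insub k is Some i then f i else one) => a Aa.
have [i [_ Ci]] := fcov a Aa.
by exists (val i); rewrite valK; split => //; apply: ltn_ord.
Qed.

Lemma index_le_cover (G : topologicalType) mul inv (one : G) (A C : set G) m K :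
  is_group mul inv one ->
  is_subgroup mul inv one A -> is_subgroup mul inv one C ->
  Defs.index mul inv A (A `&` C) m -> cover mul inv A C K -> (m <= K)%N.
Proof.
move=> Hg; have [mA m1 m1r mV mVr] := Hg.
move=> [A1 AM AV] [C1 CM CV] [f [fA finj fcov]] [g hg].
have : forall i : 'I_m, exists k : 'I_K, C (mul (inv (g k)) (f i)).
  move=> i; have [k [lk Ck]] := hg _ (fA i).
  by exists (Ordinal lk).
move=> /boolp.choice [h hh].
have : injective h.
  move=> i j e; apply: finj; split.
    by apply: AM; [apply: AV|].
  have := CM _ _ (CV _ (hh i)) (hh j).
  rewrite e (g_invM Hg) (g_invK Hg) -mA (mA (g (h j))) mVr m1.
  done.
move=> /leq_card; rewrite !card_ord; done.
Qed.

Lemma index_transport (G : topologicalType) mul inv (one : G) (f : G -> G) A B n :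
  is_group mul inv one -> hom mul f -> injective f ->
  Defs.index mul inv A B n -> Defs.index mul inv (f @` A) (f @` B) n.
Proof.
move=> Hg hf finj [g [gA ginj gcov]]; exists (f \o g); split.
- by move=> i; exists (g i).
- move=> i j [b Bb e]; apply: ginj.
  have -> : mul (inv (g i)) (g j) = b.
    by apply: finj; rewrite e hf (hom_inv Hg hf).
  done.
- move=> _ [a Aa <-]; have [i Bi] := gcov a Aa; exists i.
  exists (mul (inv (g i)) a) => //.
  by rewrite hf (hom_inv Hg hf).
Qed.

Lemma aut_facts (G : topologicalType) mul inv (one : G) H (psi psi' : G -> G) :
  is_group mul inv one -> is_group_of_automorphisms mul H ->
  H psi -> cancel psi psi' -> cancel psi' psi ->
  [/\ H psi', hom mul psi, hom mul psi', continuous psi & continuous psi'].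
Proof.
move=> Hg [Haut Hid Hcomp Hinv] Hpsi c1 c2.
have [hpsi cpsi [p [p1 p2 cp]]] := Haut _ Hpsi.
have [q [Hq q1 q2]] := Hinv _ Hpsi.
have ep : psi' = p.
  by apply: boolp.funext => x; rewrite -[in RHS](c2 x) p1.
have eq : psi' = q.
  by apply: boolp.funext => x; rewrite -[in RHS](c2 x) q1.
split => //.
- by rewrite eq.
- exact: (hom_cancel hpsi c1 c2).
- by rewrite ep.
Qed.

Lemma conj_cover (G : topologicalType) mul inv (one : G) H O alpha psi psi' na :
  is_group mul inv one -> is_group_of_automorphisms mul H ->
  compact_open_subgroup mul inv one O ->
  (forall phi, H phi -> exists n, Defs.index mul inv (phi @` O) (phi @` O `&` O) n
      /\ is_scale mul inv one phi n) ->
  H alpha -> Defs.index mul inv (alpha @` O) (alpha @` O `&` O) na ->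
  H psi -> cancel psi psi' -> cancel psi' psi ->
  cover mul inv ((psi \o alpha \o psi') @` O) O na.
Proof.
move=> Hg HH [sO cO oO] flatO Ha ida Hpsi c1 c2.
have [Hpsi' hpsi hpsi' cpsi cpsi'] := aut_facts Hg HH Hpsi c1 c2.
have [Haut Hid Hcomp Hinv] := HH.
have [ha _ _] := Haut _ Ha.
have Hchi : H (psi \o alpha \o psi') by apply: (Hcomp) => //; apply: (Hcomp).
have [n [idn [_ sc]]] := flatO _ Hchi.
have cv := index_cover one idn.
apply: cover_mono cv _.
apply: (sc (psi @` O)).
- split; first exact: subgroup_image.
  + by apply: continuous_compact => //; exact: continuous_subspaceT.
  + have -> : psi @` O = psi' @^-1` O.
      apply/seteqP; split => [_ [y Oy <-]|x Ox] /=; first by rewrite c1.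
      by exists (psi' x) => //; rewrite c2.
    by apply: open_comp => // x _; exact: cpsi'.
- have E1 : (psi \o alpha \o psi') @` (psi @` O) = psi @` (alpha @` O).
    apply/seteqP; split => [_ [_ [y Oy <-] <-]|_ [_ [y Oy <-] <-]].
      by exists (alpha y); [exists y|rewrite /= c1].
    by exists (psi y); [exists y|rewrite /= c1].
  have E2 : psi @` (alpha @` O) `&` psi @` O = psi @` (alpha @` O `&` O).
    apply/seteqP; split => [x [[a Aa ea] [b Ob eb]]|_ [a [Aa Oa] <-]].
      have eab : a = b by rewrite -(c1 a) -(c1 b) ea eb.
      by exists a => //; split => //; rewrite eab.
    by split; exists a.
  rewrite E1 E2; apply: (index_transport Hg hpsi (can_inj c1) ida).
Qed.

Lemma cover_back (G : topologicalType) mul inv (one : G) (chi beta : G -> G) A C K :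
  is_group mul inv one -> hom mul chi -> (forall a, chi (beta a) = a) ->
  cover mul inv (beta @` A) C K -> cover mul inv A (chi @` C) K.
Proof.
move=> Hg hchi e [g hg]; exists (chi \o g) => a Aa.
have [k [lk Ck]] := hg (beta a) (ex_intro2 _ _ a Aa erefl).
exists k; split => //.
exists (mul (inv (g k)) (beta a)) => //.
by rewrite hchi (hom_inv Hg hchi) e.
Qed.

Lemma ln_bound (k K : nat) : (k <= K)%N ->
  Rle (Rpower.ln (INR k)) (Rmax R0 (Rpower.ln (INR K))).
Proof.
move=> le.
case: k le => [|k] le.
  rewrite /= /Rpower.ln; case: (Rlt_dec _ _) => [h|_].
    by exfalso; apply: (Rlt_irrefl R0).
  exact: Rmax_l.
apply: Rle_trans (Rmax_r _ _).
move: le; rewrite leq_eqVlt => /orP [/eqP ->|lt].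
  exact: Rle_refl.
apply: Rlt_le; apply: ln_increasing.
  by apply: lt_0_INR; apply/ltP.
by apply: lt_INR; apply/ltP.
Qed.

Theorem proposition2 (G : topologicalType) (mul : G -> G -> G) (inv : G -> G)
    (one : G) (H : set (G -> G)) :
  is_tdlc_group mul inv one ->
  is_group_of_automorphisms mul H ->
  flat mul inv one H ->
  H = FCd mul inv one H.
Proof.
move=> [[Hg _ _] _ _ _] HH [] O [cO flatO].
have HH' := HH; have [Haut Hid Hcomp Hinv] := HH'.
have sO : is_subgroup mul inv one O by case: cO.
apply/seteqP; split=> [phi Hphi|phi []//].
split => //.
have [n1 [id1 _]] := flatO phi Hphi.
have [phinv [Hphinv cpp cpp']] := Hinv phi Hphi.
have [n2 [id2 _]] := flatO phinv Hphinv.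
have [hphi _ _] := Haut _ Hphi.
have [hphinv _ _] := Haut _ Hphinv.
pose K := (n1 * n2)%N.
have key : forall b b' m, conj_class H phi b -> conj_class H phi b' ->
    Defs.index mul inv (b @` O) (b @` O `&` b' @` O) m -> (m <= K)%N.
  move=> b b' m [psi [psi' [Hpsi c1 c2 ->]]] [rho [rho' [Hrho d1 d2 ->]]] idm.
  have [_ hpsi hpsi' _ _] := aut_facts Hg HH Hpsi c1 c2.
  have [_ hrho hrho' _ _] := aut_facts Hg HH Hrho d1 d2.
  apply: (index_le_cover Hg _ _ idm).
  - by apply: subgroup_image => //; do 2 apply: hom_comp => //.
  - by apply: subgroup_image => //; do 2 apply: hom_comp => //.
  apply: (cover_trans Hg (conj_cover Hg HH cO flatO Hphi id1 Hpsi c1 c2)).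
  apply: (cover_back (beta := rho \o phinv \o rho') Hg).
  - by do 2 apply: hom_comp => //.
  - by move=> a /=; rewrite d1 cpp' d2.
  exact: (conj_cover Hg HH cO flatO Hphinv id2 Hrho d1 d2).
exists O; split => //.
exists (Rmax R0 (Rpower.ln (INR (K * K)))).
move=> b b' r Hb Hb' [m [n [im idn ->]]].
apply: ln_bound; apply: leq_mul.
  exact: (key _ _ _ Hb Hb' im).
exact: (key _ _ _ Hb' Hb idn).
Qed.
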